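(* Let $\sigma^2>0$, $\theta\in\mathbb R^d\setminus\{0\}$, $\gamma>0$ and $\mathcal X\subseteq\mathbb R^d$. For $x\in\mathcal X$ and $y\in\mathbb R$ define the $\gamma$-score of the normal linear regression model $$S_\gamma(x,y,\theta)=(2\pi\sigma^2)^{-\frac{\gamma}{2(\gamma+1)}}\exp\Big\{-\frac{\gamma}{2}\frac{(y-\theta^\top x)^2}{\sigma^2}\Big\}\frac{y-\theta^\top x}{\sigma}\,x,$$ and let $H_\theta=\{v\in\mathbb R^d:\theta^\top v=0\}$, with $d(v,H_\theta)$ the Euclidean distance from $v$ to $H_\theta$. Then for every fixed $y\in\mathbb R$, $\sup_{x\in\mathcal X}d(S_\gamma(x,y,\theta),H_\theta)<\infty$.
   Context: The model is the normal linear regression model $p(y|x,\theta,\sigma^2)=(2\pi\sigma^2)^{-1/2}\exp\{-(y-\theta^\top x)^2/(2\sigma^2)\}$ with known $\sigma^2$; $S_\gamma$ is the score of the minimum $\gamma$-divergence estimator. *)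

(* Defs.v *)
From HB Require Import structures.
From mathcomp Require Import all_boot all_order all_algebra.
From mathcomp Require Import all_classical all_reals all_analysis.
Set Implicit Arguments. Unset Strict Implicit. Unset Printing Implicit Defensive.
Import Order.TTheory GRing.Theory Num.Theory.
Local Open Scope classical_set_scope.
Local Open Scope ring_scope.

Definition dotp (R : realType) (d : nat) (u v : 'rV[R]_d) : R :=
  \sum_(i < d) u 0 i * v 0 i.

Definition enorm (R : realType) (d : nat) (v : 'rV[R]_d) : R :=
  Num.sqrt (dotp v v).

Definition hyperplane (R : realType) (d : nat) (theta : 'rV[R]_d) : set 'rV[R]_d :=
  [set v | dotp theta v = 0].

Definition edist_set (R : realType) (d : nat) (v : 'rV[R]_d) (A : set 'rV[R]_d) : R :=
  inf [set enorm (v - w) | w in A].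

Definition Sgamma (R : realType) (d : nat) (sigma gamma : R)
  (x : 'rV[R]_d) (y : R) (theta : 'rV[R]_d) : 'rV[R]_d :=
  ((2 * pi * sigma ^+ 2) `^ (- (gamma / (2 * (gamma + 1))))
   * expR (- (gamma / 2) * ((y - dotp theta x) ^+ 2 / sigma ^+ 2))
   * ((y - dotp theta x) / sigma)) *: x.

(* Main.v *)
Set Warnings "-all".
Require Import Defs.
From HB Require Import structures.
From mathcomp Require Import all_boot all_order all_algebra.
From mathcomp Require Import all_classical all_reals all_analysis.
From mathcomp Require Import ring lra.
Import Order.TTheory GRing.Theory Num.Theory.
Local Open Scope classical_set_scope.
Local Open Scope ring_scope.

Lemma expbound (R : realType) (a u : R) : 0 < a ->
  expR (- (a * u ^+ 2)) * u ^+ 2 <= a^-1 /\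
  expR (- (a * u ^+ 2)) * `|u| <= 1 + a^-1.
Proof.
move=> a0.
set v := a * u ^+ 2.
have v0 : 0 <= v by rewrite /v; apply: mulr_ge0; [exact: ltW | exact: sqr_ge0].
have E0 : 0 < expR (- v) by apply: expR_gt0.
have Ev : expR (- v) * v <= 1.
  rewrite expRN; have ev := expR_gt0 v; have := expR_ge1Dx v.
  move=> h; rewrite mulrC ler_pdivrMr //; lra.
have E1 : expR (- v) <= 1 by rewrite -expR0 ler_expR; lra.
have h1 : expR (- v) * u ^+ 2 <= a^-1.
  rewrite (_ : expR (- v) * u ^+ 2 = a^-1 * (expR (- v) * v)).
    by rewrite -[leRHS]mulr1 ler_wpM2l // invr_ge0 ltW.
  by rewrite /v; field; rewrite gt_eqF.
split => //.
have hu : `|u| <= 1 + u ^+ 2.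
  case: (lerP 0 u) => hu0; [rewrite ger0_norm // | rewrite ltr0_norm //]; nra.
apply: (le_trans (y := expR (- v) * (1 + u ^+ 2))).
  by rewrite ler_pM2l.
rewrite mulrDr mulr1; lra.
Qed.

Lemma pbound (R : realType) (K g s y t : R) : 0 <= K -> 0 < g -> 0 < s ->
  `| K * expR (- (g / 2) * ((y - t) ^+ 2 / s ^+ 2)) * ((y - t) / s) * t |
  <= K * ((1 + (g/2)^-1) * `|y| + s * (g/2)^-1).
Proof.
move=> K0 g0 s0.
set a := g / 2. have a0 : 0 < a by rewrite /a divr_gt0.
set u := (y - t) / s.
have hr : (y - t) ^+ 2 / s ^+ 2 = u ^+ 2 by rewrite /u expr_div_n.
have ht : t = y - s * u by rewrite /u mulrC divfK ?gt_eqF //; ring.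
rewrite hr mulNr.
have [h1 h2] := @expbound _ a u a0.
clearbody u; rewrite ht.
set E := expR (- (a * u ^+ 2)) in h1 h2 *.
have E0 : 0 < E by apply: expR_gt0.
rewrite -!mulrA normrM ger0_norm //; apply: ler_wpM2l => //.
have hE : `|E * (u * (y - s * u))| <= E * `|u| * `|y| + s * (E * u ^+ 2).
  rewrite mulrBr mulrBr; apply: (le_trans (ler_normB _ _)).
  rewrite !mulrA; apply: lerD.
    by rewrite !normrM (ger0_norm (ltW E0)).
  rewrite ger0_norm; first by rewrite le_eqVlt; apply/orP; left; apply/eqP; ring.
  have : 0 <= E * s * u ^+ 2 by rewrite mulr_ge0 ?sqr_ge0 // mulr_ge0 ?ltW.
  by rewrite expr2 !mulrA -(mulrA E u s) (mulrC u s) mulrA.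
apply: (le_trans hE).
have hy : E * `|u| * `|y| <= (1 + a^-1) * `|y| by apply: ler_wpM2r.
have hs : s * (E * u ^+ 2) <= s * a^-1 by apply: ler_wpM2l => //; apply: ltW.
lra.
Qed.

Lemma dotpZr (R : realType) (d : nat) (u v : 'rV[R]_d) (c : R) :
  dotp u (c *: v) = c * dotp u v.
Proof. rewrite /dotp mulr_sumr; apply: eq_bigr => i _; rewrite !mxE; ring. Qed.

Lemma dotpBr (R : realType) (d : nat) (u v w : 'rV[R]_d) :
  dotp u (v - w) = dotp u v - dotp u w.
Proof. rewrite /dotp -sumrB; apply: eq_bigr => i _; rewrite !mxE; ring. Qed.

Lemma dotp_gt0 (R : realType) (d : nat) (u : 'rV[R]_d) : u != 0 -> 0 < dotp u u.
Proof.
move=> u0; rewrite lt_neqAle; apply/andP; split; last first.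
  by apply: sumr_ge0 => i _; rewrite -expr2 sqr_ge0.
apply/negP => /eqP h; move/negP: u0; apply; apply/eqP/matrixP => i j.
rewrite mxE ord1.
have := @psumr_eq0P R _ predT (fun i => u 0 i * u 0 i).
move=> /(_ (fun i _ => ltac:(rewrite -expr2 sqr_ge0 //)) (esym h) j isT).
by move/eqP; rewrite mulf_eq0 orbb => /eqP.
Qed.

Theorem mainTheorem6 (R : realType) (d : nat) (sigma gamma : R)
  (theta : 'rV[R]_d) (X : set 'rV[R]_d) (y : R) :
  0 < sigma -> theta != 0 -> 0 < gamma ->
  exists M : R, forall x, X x ->
    edist_set (Sgamma sigma gamma x y theta) (hyperplane theta) <= M.
Proof.
move=> s0 th0 g0.
set K := (2 * pi * sigma ^+ 2) `^ (- (gamma / (2 * (gamma + 1)))).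
have K0 : 0 <= K by apply: powR_ge0.
have tt0 := @dotp_gt0 _ _ _ th0.
set tt := dotp theta theta in tt0.
exists (K * ((1 + (gamma/2)^-1) * `|y| + sigma * (gamma/2)^-1) / Num.sqrt tt).
move=> x _.
set S := Sgamma sigma gamma x y theta.
set p := dotp theta S.
have pb : `|p| <= K * ((1 + (gamma/2)^-1) * `|y| + sigma * (gamma/2)^-1).
  rewrite /p /S /Sgamma dotpZr -/K; exact: (@pbound R K gamma sigma y).
set w := S - (p / tt) *: theta.
have Hw : hyperplane theta w.
  rewrite /hyperplane /= /w dotpBr dotpZr -/p -/tt divfK ?gt_eqF //; ring.
have Ew : enorm (S - w) = `|p| / Num.sqrt tt.
  rewrite /w opprB addrC subrK /enorm dotpZr.
  rewrite (_ : dotp ((p / tt) *: theta) theta = (p / tt) * tt); last first.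
    rewrite /dotp mulr_sumr; apply: eq_bigr => i _; rewrite !mxE; ring.
  rewrite mulrA -expr2 sqrtrM ?sqr_ge0 // sqrtr_sqr normrM normfV (gtr0_norm tt0).
  have st : 0 < Num.sqrt tt by rewrite sqrtr_gt0.
  rewrite -{1}(sqr_sqrtr (ltW tt0)) expr2 invfM !mulrA mulfVK ?gt_eqF //.
apply: (le_trans (y := `|p| / Num.sqrt tt)).
  rewrite /edist_set; rewrite -Ew; apply: ge_inf.
    by exists 0 => _ [v _ <-]; rewrite /enorm sqrtr_ge0.

  by exists w.
apply: ler_wpM2r => //.
Qed.
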